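(* If $p$ is a two-phase solution of the focusing NLS equation, then $\nu_1$ and $\nu_2$ are bounded: there is $M>0$ with $\nu_1(x,t)^2+\nu_2(x,t)^2<M$ for all $(x,t)\in\mathbb R^2$.
   Context: Let $p(x,t)$, $(x,t)\in\mathbb R^2$, be a smooth complex-valued solution of the focusing nonlinear Schrödinger equation $ip_t+p_{xx}+2|p|^2p=0$; $^*$ denotes complex conjugation and subscripts denote partial derivatives. Put $\mathbb U=\begin{pmatrix}-i\lambda& ip\\ ip^*& i\lambda\end{pmatrix}$ and $\mathbb V=\begin{pmatrix}-2i\lambda^2+i|p|^2& 2i\lambda p-p_x\\ 2i\lambda p^*+p^*_x& 2i\lambda^2-i|p|^2\end{pmatrix}$. The solution $p$ is called a two-phase solution if there exist real constants $c_0,c_1,c_2$ such that the matrix $\Psi=\begin{pmatrix}\Psi_{11}&\Psi_{12}\\ \Psi_{21}&-\Psi_{11}\end{pmatrix}$ with $\Psi_{11}=-i\lambda^3-ic_2\lambda^2+(\tfrac12 i|p|^2-ic_1)\lambda+\tfrac14(pp^*_x-p_xp^* )+\tfrac12 ic_2|p|^2-ic_0$, $\Psi_{12}=ip\lambda^2+(-\tfrac12p_x+ic_2p)\lambda-\tfrac14 ip_{xx}-\tfrac12 ip|p|^2-\tfrac12c_2p_x+ic_1p$, $\Psi_{21}=ip^*\lambda^2+(\tfrac12p^*_x+ic_2p^* )\lambda-\tfrac14 ip^*_{xx}-\tfrac12 ip^*|p|^2+\tfrac12c_2p^*_x+ic_1p^*$ satisfies $\Psi_x=[\mathbb U,\Psi]$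 and $\Psi_t=[\mathbb V,\Psi]$ identically in $\lambda\in\mathbb C$. Set $\nu_1=|p|^2$ and $\nu_2=i(p^*p_x-pp^*_x)$ (both real). *)

(* Defs.v *)
From Stdlib Require Import Reals.
Open Scope R_scope.

Record Cx : Type := mkC { Re : R ; Im : R }.

Definition RC (r : R) : Cx := mkC r 0.
Definition Ci : Cx := mkC 0 1.
Definition Cadd (a b : Cx) : Cx := mkC (Re a + Re b) (Im a + Im b).
Definition Copp (a : Cx) : Cx := mkC (- Re a) (- Im a).
Definition Csub (a b : Cx) : Cx := Cadd a (Copp b).
Definition Cmul (a b : Cx) : Cx :=
  mkC (Re a * Re b - Im a * Im b) (Re a * Im b + Im a * Re b).
Definition Cconj (a : Cx) : Cx := mkC (Re a) (- Im a).
Definition Cnorm2 (a : Cx) : R := Re a ^ 2 + Im a ^ 2.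

Declare Scope C_scope.
Delimit Scope C_scope with C.
Infix "+" := Cadd : C_scope.
Infix "-" := Csub : C_scope.
Infix "*" := Cmul : C_scope.
Notation "- a" := (Copp a) : C_scope.

Definition cont2 (f : R -> R -> R) : Prop :=
  forall x t eps, 0 < eps -> exists delta, 0 < delta /\
    forall x' t', Rabs (x' - x) < delta -> Rabs (t' - t) < delta ->
      Rabs (f x' t' - f x t) < eps.

Definition Cderiv_x (F : R -> R -> Cx) (x t : R) (d : Cx) : Prop :=
  derivable_pt_lim (fun y => Re (F y t)) x (Re d) /\
  derivable_pt_lim (fun y => Im (F y t)) x (Im d).
Definition Cderiv_t (F : R -> R -> Cx) (x t : R) (d : Cx) : Prop :=
  derivable_pt_lim (fun s => Re (F x s)) t (Re d) /\
  derivable_pt_lim (fun s => Im (F x s)) t (Im d).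

(** [P] is the family of all partial derivatives of the smooth function
    [P 0 0] : R^2 -> Cx, i.e. [P i j] = d_x^i d_t^j (P 0 0): every [P i j] is
    jointly continuous, and its partial derivatives in x and t are
    [P (S i) j] and [P i (S j)].  A function p is Cx^infinity iff such a
    family with [P 0 0 = p] exists (and then the family is unique). *)
Definition smooth_family (P : nat -> nat -> R -> R -> Cx) : Prop :=
  forall i j,
    cont2 (fun x t => Re (P i j x t)) /\ cont2 (fun x t => Im (P i j x t)) /\
    forall x t, Cderiv_x (P i j) x t (P (S i) j x t) /\
                Cderiv_t (P i j) x t (P i (S j) x t).

Definition focusing_NLS (P : nat -> nat -> R -> R -> Cx) : Prop :=
  forall x t,
    (Ci * P 0%nat 1%nat x t + P 2%nat 0%nat x t
     + RC (2 * Cnorm2 (P 0%nat 0%nat x t)) * P 0%nat 0%nat x t)%C = RC 0.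

Record M2 : Type := mkM2 { m11 : Cx ; m12 : Cx ; m21 : Cx ; m22 : Cx }.

Definition M2mul (A B : M2) : M2 :=
  mkM2 (m11 A * m11 B + m12 A * m21 B)%C (m11 A * m12 B + m12 A * m22 B)%C
       (m21 A * m11 B + m22 A * m21 B)%C (m21 A * m12 B + m22 A * m22 B)%C.
Definition M2sub (A B : M2) : M2 :=
  mkM2 (m11 A - m11 B)%C (m12 A - m12 B)%C (m21 A - m21 B)%C (m22 A - m22 B)%C.
Definition M2comm (A B : M2) : M2 := M2sub (M2mul A B) (M2mul B A).

Definition M2deriv_x (F : R -> R -> M2) (x t : R) (D : M2) : Prop :=
  Cderiv_x (fun y s => m11 (F y s)) x t (m11 D) /\
  Cderiv_x (fun y s => m12 (F y s)) x t (m12 D) /\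
  Cderiv_x (fun y s => m21 (F y s)) x t (m21 D) /\
  Cderiv_x (fun y s => m22 (F y s)) x t (m22 D).
Definition M2deriv_t (F : R -> R -> M2) (x t : R) (D : M2) : Prop :=
  Cderiv_t (fun y s => m11 (F y s)) x t (m11 D) /\
  Cderiv_t (fun y s => m12 (F y s)) x t (m12 D) /\
  Cderiv_t (fun y s => m21 (F y s)) x t (m21 D) /\
  Cderiv_t (fun y s => m22 (F y s)) x t (m22 D).

Section Lax.
Local Open Scope C_scope.
Variable P : nat -> nat -> R -> R -> Cx.

Definition p_ (x t : R) : Cx := P 0%nat 0%nat x t.
Definition px_ (x t : R) : Cx := P 1%nat 0%nat x t.
Definition pxx_ (x t : R) : Cx := P 2%nat 0%nat x t.
Definition abs2p (x t : R) : Cx := RC (Cnorm2 (p_ x t)).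

Definition U_mat (l : Cx) (x t : R) : M2 :=
  mkM2 (- (Ci * l)) (Ci * p_ x t) (Ci * Cconj (p_ x t)) (Ci * l).

Definition V_mat (l : Cx) (x t : R) : M2 :=
  mkM2 (- (RC 2 * Ci * l * l) + Ci * abs2p x t)
       (RC 2 * Ci * l * p_ x t - px_ x t)
       (RC 2 * Ci * l * Cconj (p_ x t) + Cconj (px_ x t))
       (RC 2 * Ci * l * l - Ci * abs2p x t).

Definition Psi11 (c0 c1 c2 : R) (l : Cx) (x t : R) : Cx :=
  - (Ci * l * l * l) - Ci * RC c2 * l * l
  + (RC (1/2) * Ci * abs2p x t - Ci * RC c1) * l
  + RC (1/4) * (p_ x t * Cconj (px_ x t) - px_ x t * Cconj (p_ x t))
  + RC (1/2) * Ci * RC c2 * abs2p x t - Ci * RC c0.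

Definition Psi12 (c0 c1 c2 : R) (l : Cx) (x t : R) : Cx :=
  Ci * p_ x t * l * l
  + (- (RC (1/2) * px_ x t) + Ci * RC c2 * p_ x t) * l
  - RC (1/4) * Ci * pxx_ x t
  - RC (1/2) * Ci * p_ x t * abs2p x t
  - RC (1/2) * RC c2 * px_ x t
  + Ci * RC c1 * p_ x t.

Definition Psi21 (c0 c1 c2 : R) (l : Cx) (x t : R) : Cx :=
  Ci * Cconj (p_ x t) * l * l
  + (RC (1/2) * Cconj (px_ x t) + Ci * RC c2 * Cconj (p_ x t)) * l
  - RC (1/4) * Ci * Cconj (pxx_ x t)
  - RC (1/2) * Ci * Cconj (p_ x t) * abs2p x t
  + RC (1/2) * RC c2 * Cconj (px_ x t)
  + Ci * RC c1 * Cconj (p_ x t).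

Definition Psi_mat (c0 c1 c2 : R) (l : Cx) (x t : R) : M2 :=
  mkM2 (Psi11 c0 c1 c2 l x t) (Psi12 c0 c1 c2 l x t)
       (Psi21 c0 c1 c2 l x t) (- Psi11 c0 c1 c2 l x t).

Definition two_phase : Prop :=
  exists c0 c1 c2 : R, forall (l : Cx) (x t : R),
    M2deriv_x (Psi_mat c0 c1 c2 l) x t
              (M2comm (U_mat l x t) (Psi_mat c0 c1 c2 l x t)) /\
    M2deriv_t (Psi_mat c0 c1 c2 l) x t
              (M2comm (V_mat l x t) (Psi_mat c0 c1 c2 l x t)).

(** nu1 = |p|^2, nu2 = i (p* p_x - p p*_x) (a real number; we take its real part) *)
Definition nu1 (x t : R) : R := Cnorm2 (p_ x t).
Definition nu2 (x t : R) : R :=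
  Re (Ci * (Cconj (p_ x t) * px_ x t - p_ x t * Cconj (px_ x t))).
End Lax.

(* Main.v *)
Require Import Defs.
From Stdlib Require Import Reals Lra Psatz.
Open Scope R_scope.

Definition su2 (A : M2) : Prop :=
  Re (m11 A) = 0 /\ Re (m22 A) = 0 /\ Im (m22 A) = - Im (m11 A) /\
  Re (m21 A) = - Re (m12 A) /\ Im (m21 A) = Im (m12 A).

Lemma su2_id A S : su2 A -> su2 S ->
  let D := M2comm A S in
  Re (m11 S) * Re (m11 D) + Im (m11 S) * Im (m11 D) + Re (m12 S) * Re (m12 D) + Im (m12 S) * Im (m12 D) = 0.
Proof.
  destruct A as [[a1 a2] [a3 a4] [a5 a6] [a7 a8]].
  destruct S as [[s1 s2] [s3 s4] [s5 s6] [s7 s8]].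
  unfold su2; cbn. intros (H1&H2&H3&H4&H5) (G1&G2&G3&G4&G5).
  subst. unfold M2comm, M2sub, M2mul, Csub, Cadd, Copp, Cmul; cbn. ring.
Qed.

Lemma su2_Psi P c0 c1 c2 r x t : su2 (Psi_mat P c0 c1 c2 (RC r) x t).
Proof.
  unfold su2, Psi_mat, Psi11, Psi12, Psi21, abs2p, Cnorm2, p_, px_, pxx_,
   Csub, Cadd, Cmul, Copp, Cconj, RC, Ci; cbn.
  destruct (P 0%nat 0%nat x t) as [a b]; destruct (P 1%nat 0%nat x t) as [c d];
  destruct (P 2%nat 0%nat x t) as [e f]; cbn.
  repeat split; ring.
Qed.
Lemma su2_U P r x t : su2 (U_mat P (RC r) x t).
Proof.
  unfold su2, U_mat, abs2p, Cnorm2, p_, Csub, Cadd, Cmul, Copp, Cconj, RC, Ci; cbn.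
  destruct (P 0%nat 0%nat x t) as [a b]; cbn. repeat split; ring.
Qed.
Lemma su2_V P r x t : su2 (V_mat P (RC r) x t).
Proof.
  unfold su2, V_mat, abs2p, Cnorm2, p_, px_, Csub, Cadd, Cmul, Copp, Cconj, RC, Ci; cbn.
  destruct (P 0%nat 0%nat x t) as [a b]; destruct (P 1%nat 0%nat x t) as [c d]; cbn. repeat split; ring.
Qed.

Lemma const0 (g : R -> R) : (forall y, derivable_pt_lim g y 0) -> forall a b, g a = g b.
Proof.
  intros H a b.
  assert (K : forall u v, u < v -> g u = g v).
  { intros u v Huv. edestruct (MVT_cor2 g (fun _ => 0) u v Huv) as [c [Hc _]];
    [intros; apply H| lra]. }
  destruct (Rtotal_order a b) as [h|[h|h]]; [auto|subst; auto|symmetry; auto].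
Qed.

Lemma sq3 u v w : (u+v+w)^2 <= 3*(u^2+v^2+w^2).
Proof. pose proof (pow2_ge_0 (u-v)); pose proof (pow2_ge_0 (v-w)); pose proof (pow2_ge_0 (u-w)). nra. Qed.

Definition Mb c0 c1 c2 K0 K1 :=
  let N1 := 12*(K1+K0+(1+c1+c2)^2) in
  N1 + 3*(16*K0 + 4*c2^2*N1 + 16*c0^2) + 1.

Lemma final (c0 c1 c2 n1 n2 A B K0 K1 : R) :
  A = n2/4 + c2*n1/2 - c0 -> B = -1 - c2 + n1/2 - c1 + A ->
  A^2 <= K0 -> B^2 <= K1 -> n1^2 + n2^2 < Mb c0 c1 c2 K0 K1.
Proof.
  intros HA HB H0 H1. unfold Mb.
  assert (E1 : n1 = 2*B + (-2*A) + 2*(1+c1+c2)) by lra.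
  assert (E2 : n2 = 4*A + (-2*c2*n1) + 4*c0) by lra.
  assert (Q1 : n1^2 <= 12*(K1+K0+(1+c1+c2)^2)).
  { rewrite E1. eapply Rle_trans. apply sq3.
    assert (3*((2*B)^2 + (-2*A)^2 + (2*(1+c1+c2))^2) = 12*B^2 + 12*A^2 + 12*(1+c1+c2)^2) by ring. lra. }
  assert (Q2 : n2^2 <= 3*(16*K0 + 4*c2^2*(12*(K1+K0+(1+c1+c2)^2)) + 16*c0^2)).
  { rewrite E2. eapply Rle_trans. apply sq3.
    assert (c2^2*n1^2 <= c2^2 * (12*(K1+K0+(1+c1+c2)^2))).
    { apply Rmult_le_compat_l; [apply pow2_ge_0|exact Q1]. }
    assert (3*((4*A)^2 + (-2*c2*n1)^2 + (4*c0)^2) = 48*A^2 + 12*(c2^2*n1^2) + 48*c0^2) by ring. lra. }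
  lra.
Qed.

Lemma im11 P c0 c1 c2 r x t :
  Im (Psi11 P c0 c1 c2 (RC r) x t) =
  - r^3 - c2 * r^2 + (nu1 P x t / 2 - c1) * r + nu2 P x t / 4 + c2 * nu1 P x t / 2 - c0.
Proof.
  unfold nu1, nu2, Psi11, abs2p, Cnorm2, p_, px_, Csub, Cadd, Cmul, Copp, Cconj, RC, Ci; cbn.
  destruct (P 0%nat 0%nat x t) as [a b]; destruct (P 1%nat 0%nat x t) as [c d]; cbn.
  field.
Qed.

Lemma sq4_deriv0 (a b c d : R -> R) x da db dc dd :
  derivable_pt_lim a x da -> derivable_pt_lim b x db ->
  derivable_pt_lim c x dc -> derivable_pt_lim d x dd ->
  a x * da + b x * db + c x * dc + d x * dd = 0 ->
  derivable_pt_lim (fun y => a y ^ 2 + b y ^ 2 + (c y ^ 2 + d y ^ 2)) x 0.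
Proof.
  intros Ha Hb Hc Hd E.
  apply derivable_pt_lim_ext with (f := ((a*a + b*b) + (c*c + d*d))%F).
  { intro z. unfold plus_fct, mult_fct. ring. }
  replace 0 with
   ((da * a x + a x * da + (db * b x + b x * db)) + (dc * c x + c x * dc + (dd * d x + d x * dd))) by lra.
  repeat apply derivable_pt_lim_plus; apply derivable_pt_lim_mult; assumption.
Qed.

Theorem mainTheorem15 (P : nat -> nat -> R -> R -> Cx) :
  smooth_family P -> focusing_NLS P -> two_phase P ->
  exists M : R, 0 < M /\
    forall x t : R, nu1 P x t ^ 2 + nu2 P x t ^ 2 < M.
Proof.
  intros _ _ [c0 [c1 [c2 H]]].
  set (F := fun r x t => Cnorm2 (Psi11 P c0 c1 c2 (RC r) x t) + Cnorm2 (Psi12 P c0 c1 c2 (RC r) x t)).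
  assert (Fc : forall r x t, F r x t = F r 0 0).
  { intros r x t.
    assert (Dx : forall t0 y, derivable_pt_lim (fun y => F r y t0) y 0).
    { intros t0 y. destruct (H (RC r) y t0) as [[[a b] [[c d] _]] _].
      pose proof (su2_id _ _ (su2_U P r y t0) (su2_Psi P c0 c1 c2 r y t0)) as E.
      cbv zeta in E.
      eapply derivable_pt_lim_ext; cycle 1.
      { eapply sq4_deriv0; [exact a|exact b|exact c|exact d|exact E]. }
      intro z; reflexivity. }
    assert (Dt : forall x0 s, derivable_pt_lim (fun s => F r x0 s) s 0).
    { intros x0 s. destruct (H (RC r) x0 s) as [_ [[a b] [[c d] _]]].
      pose proof (su2_id _ _ (su2_V P r x0 s) (su2_Psi P c0 c1 c2 r x0 s)) as E.
      cbv zeta in E.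
      eapply derivable_pt_lim_ext; cycle 1.
      { eapply sq4_deriv0; [exact a|exact b|exact c|exact d|exact E]. }
      intro z; reflexivity. }
    rewrite (const0 _ (Dx t) x 0). exact (const0 _ (Dt 0) t 0). }
  assert (Bd : forall r x t, Im (Psi11 P c0 c1 c2 (RC r) x t) ^ 2 <= F r 0 0).
  { intros r x t. rewrite <- (Fc r x t). unfold F, Cnorm2.
    pose proof (pow2_ge_0 (Re (Psi11 P c0 c1 c2 (RC r) x t))).
    pose proof (pow2_ge_0 (Re (Psi12 P c0 c1 c2 (RC r) x t))).
    pose proof (pow2_ge_0 (Im (Psi12 P c0 c1 c2 (RC r) x t))). lra. }
  assert (Key : forall x t, nu1 P x t ^ 2 + nu2 P x t ^ 2 < Mb c0 c1 c2 (F 0 0 0) (F 1 0 0)).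
  { intros x t.
    apply (final c0 c1 c2 _ _ (Im (Psi11 P c0 c1 c2 (RC 0) x t)) (Im (Psi11 P c0 c1 c2 (RC 1) x t))).
    - rewrite im11. ring.
    - rewrite !im11. ring.
    - apply Bd.
    - apply Bd. }
  exists (Mb c0 c1 c2 (F 0 0 0) (F 1 0 0)). split; [|exact Key].
  pose proof (Key 0 0). pose proof (pow2_ge_0 (nu1 P 0 0)). pose proof (pow2_ge_0 (nu2 P 0 0)). lra.
Qed.
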